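(* Every linear operator $A:\mathbb{R}^n\to\mathbb{R}^n$ similar to an operator that is GTP (respectively, GSTP) with respect to some totally positive structure is itself GTP (respectively, GSTP) with respect to some totally positive structure. In particular, if $A$ is similar to an operator with a totally positive (respectively, strictly totally positive) matrix, then $A$ is GTP (respectively, GSTP) with respect to some totally positive structure.
   Context: A proper cone is a closed convex cone that is pointed and solid. $\wedge^j\mathbb{R}^n$ is the $j$th exterior power and $\wedge^jA$ the operator with $(\wedge^jA)(x_1\wedge\cdots\wedge x_j)=Ax_1\wedge\cdots\wedge Ax_j$. $B$ is $K$-nonnegative if $BK\subseteq K$ and $K$-positive if $B(K\setminus\{0\})\subseteq\operatorname{int}K$. A totally positive structure is a family $\{K_1,\ldots,K_n\}$, $K_j\subset\wedge^j\mathbb{R}^n$ a proper cone; $A$ is GTP (GSTP) with respect to it if $\wedge^jA$ is $K_j$-nonnegative ($K_j$-positive) for all $j=1,\ldots,n$. A matrix is totally positive (TP) if all its minors of every order are nonnegative, and strictly totally positive (STP) if all its minors of every order are positive (i.e. all compound matrices are entrywise nonnegative, resp. positive). *)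

(* Defs.v *)
From HB Require Import structures.
From mathcomp Require Import all_boot all_order all_algebra.
From mathcomp Require Import reals.
Set Implicit Arguments. Unset Strict Implicit. Unset Printing Implicit Defensive.
Import Order.TTheory GRing.Theory Num.Theory.
Local Open Scope ring_scope.

(* Index set of the standard basis e_I = e_{i_1} /\ ... /\ e_{i_j}
   (i_1 < ... < i_j) of the exterior power  /\^j R^n :
   the j-element subsets of {0,...,n-1}.  A vector of /\^j R^n is identified
   with its coordinate function  kset n j -> R. *)
Definition kset (n j : nat) := {I : {set 'I_n} | #|I| == j}.

(* the a-th smallest element of I *)
Definition kidx n j (I : kset n j) (a : 'I_j) : 'I_n :=
  @enum_val _ (pred_of_set (val I)) (cast_ord (esym (eqP (valP I))) a).

Definition minor (R : realType) n j (A : 'M[R]_n) (I J : kset n j) : R :=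
  \det (\matrix_(a < j, b < j) A (kidx I a) (kidx J b)).

(* the operator /\^j A in coordinates: its matrix in the basis (e_I) is the
   j-th compound matrix, (/\^j A) e_J = sum_I det A[I,J] e_I *)
Definition wedge_op (R : realType) n j (A : 'M[R]_n) (x : kset n j -> R)
  : kset n j -> R :=
  fun I => \sum_(J : kset n j) minor A I J * x J.

Section Cones.
Variables (R : realType) (S : finType).
Implicit Types (K : (S -> R) -> Prop) (x y : S -> R).

Definition in_interior K x : Prop :=
  exists2 e : R, 0 < e & forall y, (forall i, `|y i - x i| < e) -> K y.

Definition closed_set K : Prop :=
  forall x, (forall e : R, 0 < e -> exists y, K y /\ forall i, `|y i - x i| < e) -> K x.

Definition convex_cone K : Prop :=
  K (fun _ => 0) /\
  (forall x y, K x -> K y -> K (fun i => x i + y i)) /\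
  (forall (c : R) x, 0 <= c -> K x -> K (fun i => c * x i)).

Definition pointed K : Prop :=
  forall x, K x -> K (fun i => - x i) -> x = (fun _ => 0).

Definition solid K : Prop := exists x, in_interior K x.

Definition proper_cone K : Prop :=
  [/\ closed_set K, convex_cone K, pointed K & solid K].

Definition K_nonneg K (B : (S -> R) -> (S -> R)) : Prop :=
  forall x, K x -> K (B x).

Definition K_pos K (B : (S -> R) -> (S -> R)) : Prop :=
  forall x, K x -> x <> (fun _ => 0) -> in_interior K (B x).
End Cones.

Definition TP_structure (R : realType) n
  (K : forall j : nat, (kset n j -> R) -> Prop) : Prop :=
  forall j, (1 <= j <= n)%N -> proper_cone (K j).

Definition GTP (R : realType) n (A : 'M[R]_n)
  (K : forall j : nat, (kset n j -> R) -> Prop) : Prop :=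
  forall j, (1 <= j <= n)%N -> K_nonneg (K j) (@wedge_op R n j A).

Definition GSTP (R : realType) n (A : 'M[R]_n)
  (K : forall j : nat, (kset n j -> R) -> Prop) : Prop :=
  forall j, (1 <= j <= n)%N -> K_pos (K j) (@wedge_op R n j A).

Definition similarR (R : realType) n (A B : 'M[R]_n) : Prop :=
  exists2 P : 'M[R]_n, P \in unitmx & A = invmx P *m B *m P.

Definition TP_matrix (R : realType) n (A : 'M[R]_n) : Prop :=
  forall j, (1 <= j <= n)%N -> forall I J : kset n j, 0 <= minor A I J.

Definition STP_matrix (R : realType) n (A : 'M[R]_n) : Prop :=
  forall j, (1 <= j <= n)%N -> forall I J : kset n j, 0 < minor A I J.

(* Main.v *)
Require Import Defs.
From HB Require Import structures.
From mathcomp Require Import all_boot all_order all_algebra.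
From mathcomp Require Import reals.
From mathcomp Require Import fingroup perm.
From Stdlib Require Import FunctionalExtensionality.
From mathcomp Require Import lra.
Set Implicit Arguments. Unset Strict Implicit. Unset Printing Implicit Defensive.
Import Order.TTheory GRing.Theory Num.Theory.
Local Open Scope ring_scope.
Lemma kidx_inj n j (K : kset n j) : injective (kidx K).
Proof. by move=> a b /enum_val_inj /cast_ord_inj. Qed.

Lemma kidx_mem n j (K : kset n j) a : kidx K a \in val K.
Proof. exact: (@enum_valP _ (pred_of_set (val K))). Qed.

Lemma kidx_surj n j (K : kset n j) y : y \in val K -> exists a, kidx K a = y.
Proof.
move=> Hy.
exists (cast_ord (eqP (valP K)) (enum_rank_in Hy y)).
rewrite /kidx cast_ordK.
exact: (enum_rankK_in Hy Hy).
Qed.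

Lemma kidx_set n j (K : kset n j) : val K = [set kidx K a | a in 'I_j].
Proof.
apply/setP=> y; apply/idP/imsetP.
  by move/kidx_surj=> [a <-]; exists a.
by move=> [a _ ->]; exact: kidx_mem.
Qed.

Lemma det_expand_f (R : comRingType) n j (X : 'M[R]_(j,n)) (Y : 'M[R]_(n,j)) :
  \det (X *m Y) = \sum_(f : {ffun 'I_j -> 'I_n})
     (\prod_a X a (f a)) * \det (\matrix_(a, b) Y (f a) b).
Proof.
rewrite /determinant.
transitivity (\sum_(s : 'S_j) \sum_(f : {ffun 'I_j -> 'I_n})
   (-1) ^+ s * \prod_a (X a (f a) * Y (f a) (s a))).
  apply: eq_bigr => s _; rewrite -mulr_sumr; congr (_ * _).
  rewrite -(bigA_distr_bigA (fun a k => X a k * Y k (s a))); apply: eq_bigr => a _.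
  by rewrite mxE.
rewrite exchange_big /=; apply: eq_bigr => f _.
rewrite mulr_sumr; apply: eq_bigr => s _.
rewrite big_split /= mulrCA; congr (_ * (_ * _)).
by apply: eq_bigr => a _; rewrite mxE.
Qed.

Definition phi n j (p : kset n j * 'S_j) : {ffun 'I_j -> 'I_n} :=
  [ffun a => kidx p.1 (p.2 a)].

Lemma phi_inj n j : injective (@phi n j).
Proof.
move=> [K1 s1] [K2 s2] /ffunP E.
have {}E a : kidx K1 (s1 a) = kidx K2 (s2 a) by have := E a; rewrite !ffunE.
have EK : K1 = K2.
  apply: val_inj; rewrite !kidx_set; apply/setP=> y.
  apply/imsetP/imsetP=> [[a _ ->]|[a _ ->]].
    exists (s2 (s1^-1 a))%g => //.
    by rewrite -E permKV.
  exists (s1 (s2^-1 a))%g => //.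
  by rewrite E permKV.
subst K2; congr (_, _); apply/permP => a.
exact: kidx_inj (E a).
Qed.

Lemma phi_surj n j (f : {ffun 'I_j -> 'I_n}) : injective f ->
  f \in [set phi p | p in [set: kset n j * 'S_j]].
Proof.
move=> finj.
have cS : #|[set f a | a in 'I_j]| == j by rewrite card_imset // card_ord.
pose K : kset n j := exist (fun I : {set 'I_n} => #|I| == j) _ cS.
have ex a : exists b, kidx K b = f a.
  by apply: kidx_surj; rewrite /= imset_f.
pose g a := odflt a [pick b | kidx K b == f a].
have gE a : kidx K (g a) = f a.
  rewrite /g; case: pickP => [b /eqP //|H].
  by have [b Hb] := ex a; have := H b; rewrite Hb eqxx.
have ginj : injective g.
  by move=> a1 a2 E; apply: finj; rewrite -!gE E.
apply/imsetP; exists (K, perm ginj) => //.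
by apply/ffunP => a; rewrite ffunE /= permE gE.
Qed.

Lemma det_rowperm (R : comRingType) n j (Y : 'M[R]_(n,j)) (K : kset n j) (s : 'S_j) :
  \det (\matrix_(a, b) Y (kidx K (s a)) b) =
  (-1) ^+ s * \det (\matrix_(a, b) Y (kidx K a) b).
Proof.
have -> : \matrix_(a, b) Y (kidx K (s a)) b = row_perm s (\matrix_(a, b) Y (kidx K a) b).
  by apply/matrixP => a b; rewrite !mxE.
by rewrite row_permE det_mulmx det_perm.
Qed.

Lemma cauchy_binet (R : comRingType) n j (X : 'M[R]_(j,n)) (Y : 'M[R]_(n,j)) :
  \det (X *m Y) = \sum_(K : kset n j)
     \det (\matrix_(a, b) X a (kidx K b)) * \det (\matrix_(a, b) Y (kidx K a) b).
Proof.
pose G (f : {ffun 'I_j -> 'I_n}) :=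
  (\prod_a X a (f a)) * \det (\matrix_(a, b) Y (f a) b).
rewrite det_expand_f -/G.
transitivity (\sum_(K : kset n j) \sum_(s : 'S_j) G (phi (K, s))).
  rewrite (bigID (fun f => f \in [set phi p | p in [set: kset n j * 'S_j]])) /=.
  rewrite [X in _ + X]big1 ?addr0; last first.
    move=> f Hf; rewrite /G.
    case: (injectiveP f) => [/phi_surj Hin|ninj]; first by rewrite Hin in Hf.
    have [/existsP[a1 /existsP[a2 /andP[/eqP Ea Ne]]]|H] :=
      boolP [exists a1, exists a2, (f a1 == f a2) && (a1 != a2)].
      by rewrite (determinant_alternate Ne) ?mulr0 // => b; rewrite !mxE Ea.
    exfalso; apply: ninj => a1 a2 E; apply/eqP/negPn/negP => Ne.
    by move/negP: H; apply; apply/existsP; exists a1; apply/existsP; exists a2; rewrite E eqxx.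
  rewrite pair_bigA /= -(big_imset _ (in2W (@phi_inj n j))) /=.
  by apply: eq_bigl => f; apply/idP/idP => /imsetP[p _ ->]; apply/imsetP; exists p; rewrite ?inE.
apply: eq_bigr => K _.
rewrite {1}/determinant mulr_suml; apply: eq_bigr => s _.
rewrite /G.
have -> : \matrix_(a,b) Y (phi (K,s) a) b = \matrix_(a,b) Y (kidx K (s a)) b.
  by apply/matrixP=> a b; rewrite !mxE ffunE.
rewrite det_rowperm.
rewrite mulrCA mulrA; congr (_ * _).
  by congr (_ * _); apply: eq_bigr => a _; rewrite !mxE ffunE.
Qed.

Lemma minorM (R : realType) n j (P Q : 'M[R]_n) (I J : kset n j) :
  minor (P *m Q) I J = \sum_(K : kset n j) minor P I K * minor Q K J.
Proof.
rewrite /minor.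
have -> : \matrix_(a, b) (P *m Q) (kidx I a) (kidx J b) =
  (\matrix_(a, k) P (kidx I a) k) *m (\matrix_(k, b) Q k (kidx J b)).
  by apply/matrixP => a b; rewrite !mxE; apply: eq_bigr => k _; rewrite !mxE.
rewrite cauchy_binet; apply: eq_bigr => K _.
by congr (_ * _); congr (\det _); apply/matrixP => a b; rewrite !mxE.
Qed.

Lemma wedge_opM (R : realType) n j (P Q : 'M[R]_n) (x : kset n j -> R) :
  wedge_op (P *m Q) x = wedge_op P (wedge_op Q x).
Proof.
apply: functional_extensionality => I; rewrite /wedge_op.
under eq_bigr => J _ do rewrite minorM mulr_suml.
rewrite exchange_big /=; apply: eq_bigr => K _.
by rewrite mulr_sumr; apply: eq_bigr => J _; rewrite mulrA.
Qed.

Lemma minor1 (R : realType) n j (I J : kset n j) :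
  minor (1%:M : 'M[R]_n) I J = (I == J)%:R.
Proof.
rewrite /minor; have [<-|NIJ] := eqVneq I J.
  have -> : \matrix_(a, b) (1%:M : 'M[R]_n) (kidx I a) (kidx I b) = 1%:M.
    by apply/matrixP => a b; rewrite !mxE (inj_eq (@kidx_inj _ _ I)).
  by rewrite det1.
have [b Hb] : exists b, kidx J b \notin val I.
  case: (boolP [exists b, kidx J b \notin val I]) => [/existsP//|H].
  rewrite negb_exists in H; move/forallP: H => H.
  exfalso; apply/negP: NIJ; rewrite negbK.
  apply/eqP/val_inj/eqP; rewrite eq_sym eqEcard.
  rewrite (eqP (valP I)) (eqP (valP J)) leqnn andbT.
  apply/subsetP => y; rewrite kidx_set => /imsetP[a _ ->].
  by have := H a; rewrite negbK.
rewrite (expand_det_col _ b) big1 // => a _; rewrite !mxE.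
case: eqP => [E|_]; last by rewrite mul0r.
by move: Hb; rewrite -E kidx_mem.
Qed.

Lemma wedge_op1 (R : realType) n j (x : kset n j -> R) :
  wedge_op (1%:M : 'M[R]_n) x = x.
Proof.
apply: functional_extensionality => I; rewrite /wedge_op (bigD1 I) //= big1 ?addr0.
  by rewrite minor1 eqxx mul1r.
by move=> J /negbTE NJ; rewrite minor1 eq_sym NJ mul0r.
Qed.


Lemma wedge0 (R : realType) n j (P : 'M[R]_n) :
  wedge_op P (fun _ : kset n j => 0) = (fun _ => 0).
Proof.
by apply: functional_extensionality => I; rewrite /wedge_op big1 // => J _; rewrite mulr0.
Qed.

Lemma wedgeD (R : realType) n j (P : 'M[R]_n) (x y : kset n j -> R) :
  wedge_op P (fun i => x i + y i) = (fun I => wedge_op P x I + wedge_op P y I).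
Proof.
apply: functional_extensionality => I; rewrite /wedge_op -big_split.
by apply: eq_bigr => J _; rewrite mulrDr.
Qed.

Lemma wedgeZ (R : realType) n j (P : 'M[R]_n) c (x : kset n j -> R) :
  wedge_op P (fun i => c * x i) = (fun I => c * wedge_op P x I).
Proof.
apply: functional_extensionality => I; rewrite /wedge_op mulr_sumr.
by apply: eq_bigr => J _; rewrite mulrCA.
Qed.

Lemma wedgeN (R : realType) n j (P : 'M[R]_n) (x : kset n j -> R) :
  wedge_op P (fun i => - x i) = (fun I => - wedge_op P x I).
Proof.
apply: functional_extensionality => I; rewrite /wedge_op -sumrN.
by apply: eq_bigr => J _; rewrite mulrN.
Qed.

Lemma wedge_cont (R : realType) n j (P : 'M[R]_n) (e : R) : 0 < e ->
  exists2 d : R, 0 < d & forall x y : kset n j -> R,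
    (forall J, `|y J - x J| < d) -> forall I, `|wedge_op P y I - wedge_op P x I| < e.
Proof.
move=> e0.
pose C := \sum_(I : kset n j) \sum_(J : kset n j) `|minor P I J|.
have C0 : 0 <= C by apply: sumr_ge0 => I _; apply: sumr_ge0 => J _.
have C1 : 0 < C + 1 by rewrite ltr_wpDl.
pose d := e / (C + 1).
have d0 : 0 < d by rewrite divr_gt0.
have Cd : C * d < e.
  have -> : e = (C + 1) * d by rewrite /d mulrC divfK // gt_eqF.
  by rewrite ltr_pM2r // ltrDl.
exists d => // x y H I.
apply: le_lt_trans Cd.
have -> : wedge_op P y I - wedge_op P x I = \sum_J minor P I J * (y J - x J).
  by rewrite /wedge_op -sumrB; apply: eq_bigr => J _; rewrite mulrBr.
apply: le_trans (ler_norm_sum _ _ _) _.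
apply: le_trans (_ : \sum_J `|minor P I J| * d <= _).
  apply: ler_sum => J _; rewrite normrM ler_wpM2l //.
  exact: ltW.
rewrite -mulr_suml ler_pM2r //.
rewrite /C [X in _ <= X](bigD1 I) //= -[X in X <= _]addr0 lerD2l.
by apply: sumr_ge0 => I' _; apply: sumr_ge0 => J _.
Qed.

Definition pullK (R : realType) n (P : 'M[R]_n)
  (K : forall j : nat, (kset n j -> R) -> Prop) : forall j : nat, (kset n j -> R) -> Prop :=
  fun j x => K j (wedge_op P x).

Lemma LM (R : realType) n j (P : 'M[R]_n) (y : kset n j -> R) : P \in unitmx ->
  wedge_op P (wedge_op (invmx P) y) = y.
Proof. by move=> Pu; rewrite -wedge_opM mulmxV // wedge_op1. Qed.

Lemma ML (R : realType) n j (P : 'M[R]_n) (y : kset n j -> R) : P \in unitmx ->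
  wedge_op (invmx P) (wedge_op P y) = y.
Proof. by move=> Pu; rewrite -wedge_opM mulVmx // wedge_op1. Qed.

Lemma pull_interior (R : realType) n j (P : 'M[R]_n) (K : (kset n j -> R) -> Prop) z :
  P \in unitmx -> in_interior K z ->
  in_interior (fun x => K (wedge_op P x)) (wedge_op (invmx P) z).
Proof.
move=> Pu [e e0 He].
have [d d0 Hd] := wedge_cont j P e0.
exists d => // y Hy; apply: He => I.
by have := Hd _ _ Hy I; rewrite LM.
Qed.

Lemma pull_proper (R : realType) n j (P : 'M[R]_n) (K : (kset n j -> R) -> Prop) :
  P \in unitmx -> proper_cone K -> proper_cone (fun x => K (wedge_op P x)).
Proof.
move=> Pu [Kc [K0 [KD KZ]] Kp [z Hz]]; split.
- move=> x Hx; apply: Kc => e e0.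
  have [d d0 Hd] := wedge_cont j P e0.
  have [y [Ky Hy]] := Hx d d0.
  by exists (wedge_op P y); split => // I; exact: Hd.
- split; first by rewrite wedge0.
  split; first by move=> x y Hx Hy; rewrite wedgeD; exact: KD.
  by move=> c x c0 Hx; rewrite wedgeZ; exact: KZ.
- move=> x Hx Hnx; rewrite wedgeN in Hnx.
  have E := Kp _ Hx Hnx.
  by rewrite -(ML x Pu) E wedge0.
- by exists (wedge_op (invmx P) z); exact: pull_interior.
Qed.

Lemma transfer (R : realType) n (A B P : 'M[R]_n)
  (K : forall j : nat, (kset n j -> R) -> Prop) :
  P \in unitmx -> A = invmx P *m B *m P ->
  [/\ TP_structure K -> TP_structure (pullK P K),
      GTP B K -> GTP A (pullK P K) &
      GSTP B K -> GSTP A (pullK P K)].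
Proof.
move=> Pu EA.
have LA j (x : kset n j -> R) : wedge_op P (wedge_op A x) = wedge_op B (wedge_op P x).
  rewrite -!wedge_opM; congr wedge_op.
  by rewrite EA !mulmxA mulmxV // mul1mx.
split.
- by move=> HK j Hj; apply: pull_proper => //; exact: HK.
- by move=> HB j Hj x Hx; rewrite /pullK LA; exact: HB.
- move=> HB j Hj x Hx Nx.
  have NL : wedge_op P x <> (fun _ => 0).
    by move=> E; apply: Nx; rewrite -(ML x Pu) E wedge0.
  have := pull_interior Pu (HB j Hj _ Hx NL).
  by rewrite -LA ML.
Qed.

Lemma pos_lb (R : realType) (S : finType) (z : S -> R) : (forall i, 0 < z i) ->
  exists2 e : R, 0 < e & forall i, e <= z i.
Proof.
move=> Hz.
suff [e e0 He] : exists2 e : R, 0 < e & forall i, i \in enum S -> e <= z i.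
  by exists e => // i; apply: He; rewrite mem_enum.
elim: (enum S) => [|a s [e e0 He]]; first by exists 1.
exists (Order.min e (z a)); first by rewrite lt_min e0 Hz.
move=> i; rewrite inE => /orP[/eqP ->|Hi]; first by rewrite ge_min lexx orbT.
by rewrite ge_min He.
Qed.

Definition orth (R : realType) n : forall j : nat, (kset n j -> R) -> Prop :=
  fun j x => forall I, 0 <= x I.

Lemma orth_interior (R : realType) n j (z : kset n j -> R) :
  (forall I, 0 < z I) -> in_interior (@orth R n j) z.
Proof.
move=> Hz; have [e e0 He] := pos_lb Hz.
exists e => // y Hy I.
have := Hy I; have := He I; rewrite ltr_norml => H1 /andP[H2 _].
apply: ltW; lra.
Qed.

Lemma orth_TP (R : realType) n : TP_structure (@orth R n).
Proof.
move=> j _; split.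
- move=> x Hx I; rewrite leNgt; apply/negP => xI.
  have hx : 0 < - x I by rewrite oppr_gt0.
  have [y [Hy1 Hy2]] := Hx _ hx.
  have := Hy2 I; have := Hy1 I; rewrite ltr_norml => H1 /andP[_ H2]; lra.
- split; first by move=> I.
  split; first by move=> x y Hx Hy I; rewrite addr_ge0.
  by move=> c x c0 Hx I; rewrite mulr_ge0.
- move=> x Hx Hnx; apply: functional_extensionality => I.
  have := Hx I; have := Hnx I => /= H1 H2; lra.
- exists (fun _ => 1); apply: orth_interior => I; exact: ltr01.
Qed.

Lemma orth_GTP (R : realType) n (B : 'M[R]_n) : TP_matrix B -> GTP B (@orth R n).
Proof.
move=> HB j Hj x Hx I; apply: sumr_ge0 => J _; apply: mulr_ge0 => //.
exact: HB.
Qed.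

Lemma orth_GSTP (R : realType) n (B : 'M[R]_n) : STP_matrix B -> GSTP B (@orth R n).
Proof.
move=> HB j Hj x Hx Nx; apply: orth_interior => I.
have [/existsP[J0 HJ0]|H] := boolP [exists J, 0 < x J]; last first.
  exfalso; apply: Nx; apply: functional_extensionality => J.
  rewrite negb_exists in H; move/forallP: H => H.
  have := H J; have := Hx J; rewrite -leNgt => H1 H2; lra.
rewrite /wedge_op (bigD1 J0) //=.
have h1 : 0 < minor B I J0 * x J0 by rewrite mulr_gt0 // HB.
have h2 : 0 <= \sum_(J | J != J0) minor B I J * x J.
  by apply: sumr_ge0 => J _; rewrite mulr_ge0 // ltW // HB.
lra.
Qed.

Theorem proposition17 (R : realType) (n : nat) (A : 'M[R]_n) :
  [/\ (exists B : 'M[R]_n, similarR A B /\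
         exists K, TP_structure K /\ GTP B K) ->
        exists K, TP_structure K /\ GTP A K,
      (exists B : 'M[R]_n, similarR A B /\
         exists K, TP_structure K /\ GSTP B K) ->
        exists K, TP_structure K /\ GSTP A K,
      (exists B : 'M[R]_n, similarR A B /\ TP_matrix B) ->
        exists K, TP_structure K /\ GTP A K
    & (exists B : 'M[R]_n, similarR A B /\ STP_matrix B) ->
        exists K, TP_structure K /\ GSTP A K].
Proof.
split.
- move=> [B [[P Pu EA] [K [HK HB]]]].
  have [T1 T2 _] := transfer K Pu EA.
  by exists (pullK P K); split; [exact: T1 | exact: T2].
- move=> [B [[P Pu EA] [K [HK HB]]]].
  have [T1 _ T3] := transfer K Pu EA.
  by exists (pullK P K); split; [exact: T1 | exact: T3].
- move=> [B [[P Pu EA] HB]].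
  have [T1 T2 _] := transfer (@orth R n) Pu EA.
  exists (pullK P (@orth R n)); split; first exact: T1 (@orth_TP R n).
  exact: T2 (orth_GTP HB).
- move=> [B [[P Pu EA] HB]].
  have [T1 _ T3] := transfer (@orth R n) Pu EA.
  exists (pullK P (@orth R n)); split; first exact: T1 (@orth_TP R n).
  exact: T3 (orth_GSTP HB).
Qed.
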